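(* For any explicit Runge--Kutta method $(A,b)$, the step-size coefficient satisfies $\gamma(A,b)\le R(\varphi_{A,b})$.
   Context: An $m$-stage explicit Runge--Kutta method has strictly lower-triangular $A=(a_{ij})\in\mathbb{R}^{m\times m}$ and $b\in\mathbb{R}^m$. Its stability function is the polynomial $\varphi_{A,b}(z)=1+zb^\top(I-zA)^{-1}e$, $e=(1,\dots,1)^\top$. The radius of absolute monotonicity is $R(\varphi)=\sup\{r\ge0:\ \varphi^{(j)}(z)\ge0\text{ for all }j\ge0\text{ and all }z\in[-r,0]\}$. Positivity polynomials: for variables $\xi^j_\ell$ ($1\le j\le m$, $\ell\in\mathbb{Z}$) and a sequence $(u_\ell)_{\ell\in\mathbb{Z}}$, define $y^i_\ell=u_\ell+\sum_{j<i}a_{ij}\xi^j_\ell(y^j_{\ell-1}-y^j_\ell)$ and $\tilde u_\ell=u_\ell+\sum_ib_i\xi^i_\ell(y^i_{\ell-1}-y^i_\ell)$ (this is one ERK step for $u_k'=q_k(u,t)(u_{k-1}-u_k)/\Delta x$ with $\xi^j_k=\frac{\Delta t}{\Delta x}q_k(y^j,t_n+c_j\Delta t)$). Then $\tilde u_k=\sum_{i=0}^mP_i(\xi)u_{k-i}$ with polynomials $P_i$ (independent of $k$) in the $m(m+1)/2$ variables $\xi^j_\ell$, $1\le j\le m$, $k-(m-j)\le\ell\le k$. The step-size coefficient is $\gamma(A,b)=\sup\{\delta\ge0: P_i(\xi)\ge0$ for all $0\le i\le m$, all $\xi\in[0,\delta]^{m(m+1)/2}\}$ (or $0$ if empty).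 *)

(* Defs.v *)
From HB Require Import structures.
From mathcomp Require Import all_boot all_order all_algebra.
From mathcomp Require Import classical_sets reals constructive_ereal ereal.
Set Implicit Arguments. Unset Strict Implicit. Unset Printing Implicit Defensive.
Import Order.TTheory GRing.Theory Num.Theory.
Local Open Scope ring_scope.
Local Open Scope classical_set_scope.

Section ERK.
Variable R : realType.

Definition strictly_lower (m : nat) (A : 'M[R]_m) : Prop :=
  forall i j : 'I_m, (i <= j)%N -> A i j = 0.

Definition stab_poly (m : nat) (A : 'M[R]_m) (b : 'cV[R]_m) : {poly R} :=
  1 + 'X * ((map_mx polyC b)^T
              *m invmx (1%:M - 'X *: map_mx polyC A)
              *m const_mx 1) (ord0 : 'I_1) (ord0 : 'I_1).

Definition abs_mono_on (phi : {poly R}) (r : R) : Prop :=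
  forall (j : nat) (z : R), - r <= z <= 0 -> 0 <= (phi^`(j)).[z].

(* Radius of absolute monotonicity (value 0 when no r >= 0 qualifies). *)
Definition radius_abs_mono (phi : {poly R}) : \bar R :=
  ereal_sup ([set (r%:E) | r in [set r : R | 0 <= r /\ abs_mono_on phi r]]
             `|` [set 0%E]).

(* nat-indexed access to matrix entries (0 outside the range). *)
Definition mxnat (p q : nat) (M : 'M[R]_(p, q)) (i j : nat) : R :=
  match (insub i : option 'I_p), (insub j : option 'I_q) with
  | Some i0, Some j0 => M i0 j0
  | _, _ => 0
  end.

(* Stage values y^0, ..., y^(n-1) (stages indexed from 0):
   y^i_l = u_l + sum_{j<i} a_{ij} xi^j_l (y^j_{l-1} - y^j_l). *)
Fixpoint stages (m : nat) (A : 'M[R]_m) (xi : nat -> int -> R) (u : int -> R)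
    (n : nat) : seq (int -> R) :=
  match n with
  | 0 => [::]
  | n'.+1 =>
      let s := stages A xi u n' in
      rcons s (fun l : int => u l + \sum_(j < n')
                 mxnat A n' j * xi j l
                 * (nth (fun _ => 0) s j (l - 1) - nth (fun _ => 0) s j l))
  end.

Definition erk_step (m : nat) (A : 'M[R]_m) (b : 'cV[R]_m)
    (xi : nat -> int -> R) (u : int -> R) (l : int) : R :=
  let s := stages A xi u m in
  u l + \sum_(i < m) b i ord0 * xi i l
          * (nth (fun _ => 0) s i (l - 1) - nth (fun _ => 0) s i l).

(* Positivity polynomial P_i (at k = 0): u~_0 = sum_i P_i(xi) u_{-i}, so P_i(xi)
   is u~_0 evaluated on the unit sequence concentrated at l = -i. *)
Definition pos_poly (m : nat) (A : 'M[R]_m) (b : 'cV[R]_m) (i : nat)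
    (xi : nat -> int -> R) : R :=
  erk_step A b xi (fun l : int => if l == - (i%:Z) then 1 else 0) 0.

Definition pos_on_box (m : nat) (A : 'M[R]_m) (b : 'cV[R]_m) (delta : R) : Prop :=
  forall (i : nat) (xi : nat -> int -> R),
    (i <= m)%N ->
    (forall (j : nat) (l : int), 0 <= xi j l <= delta) ->
    0 <= pos_poly A b i xi.

(* Step-size coefficient gamma(A,b) (value 0 if no delta >= 0 qualifies). *)
Definition step_size_coef (m : nat) (A : 'M[R]_m) (b : 'cV[R]_m) : \bar R :=
  ereal_sup ([set (d%:E) | d in [set d : R | 0 <= d /\ pos_on_box A b d]]
             `|` [set 0%E]).

End ERK.

(* Main.v *)
Require Import Defs.
From HB Require Import structures.
From mathcomp Require Import all_boot all_order all_algebra.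
From mathcomp Require Import classical_sets reals constructive_ereal ereal.
From mathcomp Require Import polyrcf.
From mathcomp Require Import ring lra zify.
Set Implicit Arguments. Unset Strict Implicit. Unset Printing Implicit Defensive.
Import Order.TTheory GRing.Theory Num.Theory.
Local Open Scope ring_scope.

Section Aux.
Variable R : realType.

Lemma nth_rcons_seq (T : Type) (x0 : T) (f : nat -> seq T) (g : nat -> T) :
  (forall n, f n.+1 = rcons (f n) (g n)) -> (forall n, size (f n) = n) ->
  forall n j, (j < n)%N -> nth x0 (f n) j = nth x0 (f j.+1) j.
Proof.
move=> Hf Hs; elim=> [//|n IH] j Hj.
rewrite Hf nth_rcons Hs.
rewrite ltnS leq_eqVlt in Hj; case/orP: Hj => [/eqP->|Hjn].
  by rewrite ltnn eqxx Hf nth_rcons Hs ltnn eqxx.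
by rewrite Hjn IH.
Qed.

Definition cz (p : {poly R}) (k : int) : R :=
  match k with Posz n => p`_n | Negz _ => 0 end.

Lemma czD p q k : cz (p + q) k = cz p k + cz q k.
Proof. by case: k => n /=; rewrite ?coefD ?addr0. Qed.
Lemma cz0 k : cz 0 k = 0.
Proof. by case: k => n /=; rewrite ?coef0. Qed.
Lemma czCM c p k : cz (c%:P * p) k = c * cz p k.
Proof. by case: k => n /=; rewrite ?coefCM ?mulr0. Qed.
Lemma cz_sum (I : Type) (r : seq I) (F : I -> {poly R}) k :
  cz (\sum_(i <- r) F i) k = \sum_(i <- r) cz (F i) k.
Proof. by apply: (big_morph (fun p => cz p k)) => [p q|]; rewrite ?czD ?cz0. Qed.
Lemma czXM p k : cz ('X * p) k = cz p (k - 1).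
Proof.
case: k => [[|n]|n] /=; rewrite ?coefXM //=.
  by rewrite subn1.
Qed.
Lemma czXB c p k : cz (c%:P * ('X - 1) * p) k = c * (cz p (k - 1) - cz p k).
Proof.
rewrite -mulrA czCM mulrBl mul1r; congr (_ * _).
have czN q k' : cz (- q) k' = - cz q k' by case: k' => n /=; rewrite ?coefN ?oppr0.
by rewrite czD czN czXM.
Qed.
Lemma cz1 k : cz 1 k = if k == 0 then 1 else 0.
Proof. by case: k => [[|n]|n] //=; rewrite coef1. Qed.

Lemma pos_at0 (p : {poly R}) (d : R) : 0 < d ->
  (forall z, - d <= z < 0 -> 0 <= p.[z]) -> 0 <= p.[0].
Proof.
move=> d0 H; rewrite leNgt; apply/negP => hp.
have [e e0 He] : exists2 e, 0 < e & forall y, `|y - 0| < e -> `|p.[y] - p.[0]| < - p.[0] by apply: poly_cont; rewrite oppr_gt0.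
pose y := - Num.min d (e / 2).
have hm1 : Num.min d (e/2) <= d by rewrite ge_min lexx.
have hm2 : Num.min d (e/2) <= e/2 by rewrite ge_min lexx orbT.
have hm3 : 0 < Num.min d (e/2) by rewrite lt_min d0 divr_gt0.
have := H y; rewrite /y; have -> : - d <= - Num.min d (e / 2) < 0 by apply/andP; split; lra.
move=> /(_ isT) hy.
have := He y; rewrite /y subr0 normrN gtr0_norm //.
have -> : Num.min d (e / 2) < e by lra.
move=> /(_ isT); rewrite ltr_norml => /andP [_]. lra.
Qed.


Variables (m : nat) (A : 'M[R]_m) (b : 'cV[R]_m).
Hypothesis HA : strictly_lower A.

Lemma mxnat_ord (i j : 'I_m) : mxnat A i j = A i j.
Proof. by rewrite /mxnat !valK. Qed.

Lemma mxnat_up (i j : nat) : (i <= j)%N -> mxnat A i j = 0.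
Proof.
move=> hij; rewrite /mxnat.
case: insubP => [i0 _ Ei|_] //; case: insubP => [j0 _ Ej|_] //.
by apply: HA; rewrite Ei Ej.
Qed.

Lemma sum_lower (i : 'I_m) (F : R -> nat -> {poly R}) :
  (forall k, F 0 k = 0) ->
  \sum_(j < m) F (A i j) j = \sum_(j < i) F (mxnat A i j) j.
Proof.
move=> F0.
transitivity (\sum_(j < m) F (mxnat A i j) j).
  by apply: eq_bigr => j _; rewrite mxnat_ord.
rewrite -(big_mkord xpredT (fun j => F (mxnat A i j) j)).
rewrite (big_cat_nat (n := i)) //=; last by apply: ltnW.
have -> : \sum_(i <= j < m) F (mxnat A i j) j = 0.
  rewrite big_nat_cond big1 // => j /andP[/andP[hij _] _]; by rewrite mxnat_up.
by rewrite addr0 big_mkord.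
Qed.

Fixpoint pst (q : {poly R}) (n : nat) : seq {poly R} :=
  match n with
  | 0 => [::]
  | n'.+1 => let s := pst q n' in
    rcons s (1 + \sum_(j < n') (mxnat A n' j)%:P * q * nth 0 s j)
  end.

Lemma size_pst q n : size (pst q n) = n.
Proof. by elim: n => //= n IH; rewrite size_rcons IH. Qed.

Definition Y q j := nth 0 (pst q j.+1) j.

Lemma Y_rec q j : Y q j = 1 + \sum_(i < j) (mxnat A j i)%:P * q * Y q i.
Proof.
rewrite /Y /= nth_rcons size_pst ltnn eqxx; congr (_ + _).
apply: eq_bigr => i _; congr (_ * _).
exact: (@nth_rcons_seq _ 0 (pst q)
  (fun n => 1 + \sum_(j < n) (mxnat A n j)%:P * q * nth 0 (pst q n) j)
  (fun n => erefl) (size_pst q) j i (ltn_ord i)).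
Qed.

Lemma Y_comp q j : Y q j = Y 'X j \Po q.
Proof.
elim/ltn_ind: j => j IH.
rewrite Y_rec [Y 'X j]Y_rec comp_polyD -polyC1 comp_polyC.
congr (_ + _).
rewrite (big_morph (fun p => p \Po q) (fun p p' => comp_polyD p p' q) (comp_poly0 q)).
apply: eq_bigr => i _.
by rewrite !comp_polyM comp_polyC comp_polyX -IH.
Qed.

Lemma size_Y j : (size (Y 'X j) <= j.+1)%N.
Proof.
elim/ltn_ind: j => j IH.
rewrite Y_rec (leq_trans (size_polyD _ _)) // geq_max size_poly1 //=.
apply: (big_ind (fun p : {poly R} => size p <= j.+1)%N) => //.
  by rewrite size_poly0.
  by move=> x y hx hy; rewrite (leq_trans (size_polyD _ _)) // geq_max hx hy.
move=> i _.
have h1 := size_polyMleq ((mxnat A j i)%:P * 'X) (Y 'X i).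
have h2 := size_polyMleq ((mxnat A j i)%:P) 'X.
have h3 := size_polyC_leq1 (mxnat A j i).
have h4 := IH i (ltn_ord i).
have h5 := ltn_ord i.
rewrite size_polyX in h2.
lia.
Qed.


Section Stages.
Variables (dl : R) (N : nat).
Let xi : nat -> int -> R := fun _ _ => dl.
Let u : int -> R := fun l => if l == - (N%:Z) then 1 else 0.
Let q : {poly R} := dl%:P * ('X - 1).

Definition gS n := (fun l : int => u l + \sum_(j < n)
                 mxnat A n j * xi j l
                 * (nth (fun _ => 0) (stages A xi u n) j (l - 1)
                    - nth (fun _ => 0) (stages A xi u n) j l)).

Lemma size_stages n : size (stages A xi u n) = n.
Proof. by elim: n => //= n IH; rewrite size_rcons IH. Qed.

Lemma nth_stages n j : (j < n)%N ->
  nth (fun _ => 0) (stages A xi u n) j = nth (fun _ => 0) (stages A xi u j.+1) j.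
Proof.
exact: (@nth_rcons_seq _ (fun _ => 0) (stages A xi u) gS (fun n => erefl) size_stages n j).
Qed.

Definition S j := nth (fun _ => 0) (stages A xi u j.+1) j.

Lemma S_rec j l : S j l = u l + \sum_(i < j) mxnat A j i * dl * (S i (l - 1) - S i l).
Proof.
rewrite /S /= nth_rcons size_stages ltnn eqxx; congr (_ + _).
apply: eq_bigr => i _; by rewrite !nth_stages.
Qed.

Lemma S_val j l : S j l = cz (Y q j) (l + N%:Z).
Proof.
elim/ltn_ind: j l => j IH l.
rewrite S_rec Y_rec czD cz1 cz_sum.
congr (_ + _).
  by rewrite /u addr_eq0.
apply: eq_bigr => i _.
rewrite /q mulrA -polyCM czXB !IH // addrAC.
by rewrite addrAC.
Qed.

Lemma pos_poly_val :
  pos_poly A b N xi = (1 + \sum_(i < m) (b i ord0)%:P * q * Y q i)`_N.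
Proof.
rewrite /pos_poly /erk_step.
have -> : (1 + \sum_(i < m) (b i ord0)%:P * q * Y q i)`_N
   = cz (1 + \sum_(i < m) (b i ord0)%:P * q * Y q i) (0 + N%:Z) by rewrite add0r.
rewrite czD cz1 cz_sum; congr (_ + _).
  by rewrite add0r eq_sym oppr_eq0.
apply: eq_bigr => i _.
rewrite /q mulrA -polyCM czXB !nth_stages // -!/(S i) !S_val.
by rewrite add0r.
Qed.

End Stages.


Lemma stab_eq :
  stab_poly A b = 1 + 'X * \sum_(i < m) (b i ord0)%:P * Y 'X i.
Proof.
pose M : 'M[{poly R}]_m := 1%:M - 'X *: map_mx polyC A.
pose Yv : 'cV[{poly R}]_m := \col_(i < m) Y 'X i.
have HM : M *m Yv = const_mx 1.
  apply/matrixP => i k; rewrite !mxE.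
  under eq_bigr do rewrite !mxE.
  under eq_bigr do rewrite mulrBl.
  rewrite sumrB (bigD1 i) //= eqxx mul1r big1 ?addr0; last first.
    by move=> j /negbTE hj; rewrite eq_sym hj mul0r.
  rewrite (@sum_lower i (fun a j => 'X * a%:P * Y 'X j)); last by move=> k'; rewrite mulr0 mul0r.
  rewrite [X in X - _]Y_rec.
  rewrite [X in _ - X](eq_bigr (fun j : 'I_i => (mxnat A i j)%:P * 'X * Y 'X j)) ?addrK //.
  by move=> j _; rewrite (mulrC 'X).
have HU : M \in unitmx.
  rewrite unitmxE det_trig.
    rewrite big1 ?unitr1 // => i _; by rewrite !mxE eqxx HA // mulr0 subr0.
  apply/is_trig_mxP => i j lt; rewrite !mxE HA ?(ltnW lt) // mulr0 subr0.
  case: eqP => [e|//]; by rewrite e ltnn in lt.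
rewrite /stab_poly -/M -mulmxA -HM mulKmx //.
congr (_ + _ * _); rewrite !mxE.
by apply: eq_bigr => i _; rewrite !mxE.
Qed.

Lemma size_stab : (size (stab_poly A b) <= m.+1)%N.
Proof.
rewrite stab_eq (leq_trans (size_polyD _ _)) // geq_max size_poly1 //=.
have hs : (size (\sum_(i < m) (b i ord0)%:P * Y 'X i)%R <= m)%N.
  apply: (big_ind (fun p : {poly R} => size p <= m)%N) => //.
    by rewrite size_poly0.
    by move=> x y hx hy; rewrite (leq_trans (size_polyD _ _)) // geq_max hx hy.
  move=> i _.
  have h1 := size_polyMleq ((b i ord0)%:P) (Y 'X i).
  have h3 := size_polyC_leq1 (b i ord0).
  have h4 := size_Y i.
  have h5 := ltn_ord i.
  lia.
apply: leq_trans (size_polyMleq _ _) _; rewrite size_polyX.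
move: hs; set k := size _; lia.
Qed.

Lemma taylor_coef (p : {poly R}) (dl : R) (N : nat) :
  (p \Po (dl%:P * ('X - 1)))`_N = p^`N(N).[- dl] * dl ^+ N.
Proof.
rewrite /comp_poly.
have -> : dl%:P * ('X - 1) = (- dl)%:P + dl%:P * 'X.
  by rewrite mulrBr mulr1 polyCN addrC.
rewrite (@nderiv_taylor_wide _ (size p + N.+1)); last first.
  by rewrite size_map_polyC leq_addr.
  exact: mulrC.
rewrite coef_sum.
under eq_bigr do rewrite nderivn_map horner_map /= exprMn -rmorphXn /= mulrA -polyCM coefCM coefXn.
have hN : (N < size p + N.+1)%N by rewrite addnS ltnS leq_addl.
rewrite (bigD1 (Ordinal hN)) //= eqxx mulr1 big1 ?addr0 // => i hi.
have -> : (N == i) = false.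
  apply/negbTE; apply: contra hi => /eqP e; apply/eqP; apply: val_inj => /=; exact: (esym e).
by rewrite mulr0.
Qed.


Lemma box_abs_mono d : 0 < d -> pos_on_box A b d ->
  abs_mono_on (stab_poly A b) d.
Proof.
move=> d0 Hb j z /andP[hz1 hz2].
case: (leqP j m) => hj; last first.
  by rewrite derivn_poly0 ?horner0 // (leq_trans size_stab).
have key : forall z', - d <= z' < 0 -> 0 <= (stab_poly A b)^`(j).[z'].
  move=> z' /andP[h1 h2].
  have := Hb j (fun _ _ => - z') hj.
  have hb : forall (j0 : nat) (l : int), 0 <= - z' <= d.
    by move=> _ _; apply/andP; split; lra.
  move=> /(_ hb); rewrite pos_poly_val.
  rewrite (eq_bigr (fun i : 'I_m => (b i ord0)%:P * ((-z')%:P * ('X - 1)) * (Y 'X i \Po ((-z')%:P * ('X - 1))))); last by move=> i _; rewrite -Y_comp.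
  set q := (-z')%:P * ('X - 1).
  have -> : 1 + \sum_(i < m) (b i ord0)%:P * q * (Y 'X i \Po q)
     = stab_poly A b \Po q.
    have c1 : (1 : {poly R}) \Po q = 1 by rewrite -polyC1 comp_polyC.
    rewrite stab_eq comp_polyD c1 comp_polyM comp_polyX.
    congr (_ + _).
    rewrite (big_morph (fun p => p \Po q) (fun p p' => comp_polyD p p' _) (comp_poly0 _)).
    rewrite mulr_sumr; apply: eq_bigr => i _.
    by rewrite comp_polyM comp_polyC (mulrC _ q) mulrA.
  rewrite taylor_coef opprK pmulr_lge0; last by apply: exprn_gt0; rewrite oppr_gt0.
  move=> h; rewrite nderivn_def hornerMn; exact: mulrn_wge0.
have [zlt|zge] := ltP z 0; first by apply: key; apply/andP; split.
have -> : z = 0 by apply/le_anti/andP; split.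
exact: pos_at0 d0 key.
Qed.

End Aux.

Unset Implicit Arguments.
Set Strict Implicit.

Theorem proposition1 (R : realType) (m : nat) (A : 'M[R]_m) (b : 'cV[R]_m) :
  strictly_lower A ->
  (step_size_coef A b <= radius_abs_mono (stab_poly A b))%E.
Proof.
move=> HA; rewrite /step_size_coef /radius_abs_mono.
apply: ereal_sup_le => x [[d [d0 hd] <-]|->]; last by right.
have [->|dn0] := eqVneq d 0; first by right.
left; exists d => //; split => //.
apply: box_abs_mono => //.
by rewrite lt_def dn0 d0.
Qed.
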